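(* Let $G$ be a graph and let $S$ be a twin cover of $G$ with $|S|=k$. Let $\alpha$ and $\beta$ be two specification functions for $G$ and let $\sigma$ and $\pi$ be two clean layouts of $G$ that are similar with respect to $S$. If $\sigma$ and $\pi$ both respect $\alpha$ in count and $\beta$ in size, then $\mathcal{I}(\sigma)=\mathcal{I}(\pi)$.
   Context: All graphs are finite, simple and undirected; $n=|V(G)|$. For a layout (linear ordering) $\sigma$ of $V(G)$, $N_L(v,\sigma)$, $N_R(v,\sigma)$ are the neighbours of $v$ before/after $v$; $\mathcal{I}(v,\sigma)=\big||N_L(v,\sigma)|-|N_R(v,\sigma)|\big|$ and $\mathcal{I}(\sigma)=\sum_v\mathcal{I}(v,\sigma)$. A twin cover of $G$ is a set $S\subseteq V(G)$ such that every connected component $X$ of $G-S$ is a set of true twins ($N[u]=N[v]$ for $u,v\in X$); these components are called the cliques of $G-S$. The type of a clique $C$ is $N(v)\cap S$ for $v\in C$. A clique is large if it has more than $k$ vertices, small otherwise. Let $\mathcal{C}=(2^S\times\{0\}\times[k])\cup(2^S\times\{1\}\times\{e,o\})$; the class of a clique $C$ of type $T$ is $(T,1,o)$ if $C$ is large with $|C|$ odd, $(T,1,e)$ if $C$ is large with $|C|$ even, and $(T,0,j)$ if $C$ is small with $|C|=j$. A layout is clean if the vertices of each clique of $G-S$ appear consecutively; in a clean layout $\sigma$, the location of a clique $C$ is $|\{s\in S: s<_\sigma v\}|+1\in[k+1]$ for any $v\in C$. A specification function is a map $\mathcal{C}\times[k+1]\to\{0,1,\dots,n\}$. A clean layout $\sigma$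 respects $\alpha$ in count if for every $j\in[k+1]$ and $\nu\in\mathcal{C}$ the number of cliques of class $\nu$ at location $j$ is $\alpha(\nu,j)$, and respects $\beta$ in size if for every $j,\nu$ the total number of vertices in cliques of class $\nu$ at location $j$ is $\beta(\nu,j)$. Two layouts are similar with respect to $S$ if their restrictions to $S$ are the same ordering. *)

(* Defs.v *)
From mathcomp Require Import all_boot.
Set Implicit Arguments. Unset Strict Implicit. Unset Printing Implicit Defensive.

Section Defs.
Variables (T : finType) (e : rel T).

Definition simple_graph : Prop := symmetric e /\ irreflexive e.

Definition is_layout (s : seq T) : Prop := uniq s /\ forall v, v \in s.

Definition before (s : seq T) (u v : T) : bool := index u s < index v s.

Definition NL (s : seq T) (v : T) : {set T} := [set u | e v u & before s u v].
Definition NR (s : seq T) (v : T) : {set T} := [set u | e v u & before s v u].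

(* | |N_L| - |N_R| | (absolute difference in nat) *)
Definition imb_v (s : seq T) (v : T) : nat :=
  (#|NL s v| - #|NR s v|) + (#|NR s v| - #|NL s v|).

Definition imbalance (s : seq T) : nat := \sum_(v : T) imb_v s v.

Variable S : {set T}.

Definition eGS : rel T := [rel u v | [&& e u v, u \notin S & v \notin S]].

Definition cnbh (v : T) : {set T} := v |: [set w | e v w].

Definition twin_cover : Prop :=
  forall u v, u \notin S -> v \notin S -> connect eGS u v -> cnbh u = cnbh v.

Definition comp (v : T) : {set T} := [set u | (u \notin S) && connect eGS v u].

Definition cliques : {set {set T}} := [set comp v | v in ~: S].

Definition ctype (C : {set T}) : {set T} :=
  match [pick v in C] with
  | Some v => [set w in S | e v w]
  | None => set0
  end.

(* Classes are encoded as triples (T', b, m):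
   (T', true, 1)  <-> (T', 1, o)   (large, odd size)
   (T', true, 0)  <-> (T', 1, e)   (large, even size)
   (T', false, j) <-> (T', 0, j)   (small, size j, 1 <= j <= k) *)
Definition class_t := ({set T} * bool * nat)%type.

Definition in_classes (nu : class_t) : bool :=
  let: (Ty, b, m) := nu in
  (Ty \subset S) && (if b then m < 2 else (1 <= m <= #|S|)).

Definition cclass (C : {set T}) : class_t :=
  if #|S| < #|C| then (ctype C, true, nat_of_bool (odd #|C|))
  else (ctype C, false, #|C|).

Definition clean (s : seq T) : Prop :=
  forall C, C \in cliques -> forall u w x, u \in C -> w \in C ->
    before s u x -> before s x w -> x \in C.

Definition vloc (s : seq T) (v : T) : nat := #|[set x in S | before s x v]|.+1.

Definition cloc (s : seq T) (C : {set T}) : nat :=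
  match [pick v in C] with Some v => vloc s v | None => 0 end.

Definition spec_fun (alpha : class_t -> nat -> nat) : Prop :=
  forall nu j, in_classes nu -> 1 <= j <= #|S|.+1 -> alpha nu j <= #|T|.

Definition cliques_at (s : seq T) (nu : class_t) (j : nat) : {set {set T}} :=
  [set C in cliques | (cclass C == nu) && (cloc s C == j)].

Definition respects_count (s : seq T) (alpha : class_t -> nat -> nat) : Prop :=
  forall nu j, in_classes nu -> 1 <= j <= #|S|.+1 ->
    #|cliques_at s nu j| = alpha nu j.

Definition respects_size (s : seq T) (beta : class_t -> nat -> nat) : Prop :=
  forall nu j, in_classes nu -> 1 <= j <= #|S|.+1 ->
    \sum_(C in cliques_at s nu j) #|C| = beta nu j.

Definition similar (s p : seq T) : Prop :=
  forall x y, x \in S -> y \in S -> before s x y = before p x y.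

End Defs.

(* Main.v *)
Require Import Defs.
From mathcomp Require Import all_boot zify.
Set Implicit Arguments. Unset Strict Implicit. Unset Printing Implicit Defensive.

Section Layout.
Variables (T : finType) (s : seq T).
Hypothesis Hs : is_layout s.

Lemma bef_irr x : before s x x = false.
Proof. by rewrite /before ltnn. Qed.

Lemma bef_trans x y z : before s x y -> before s y z -> before s x z.
Proof. rewrite /before; lia. Qed.

Lemma bef_total x y : x != y -> before s x y || before s y x.
Proof.
move=> nxy; rewrite /before; case: (ltngtP (index x s) (index y s)) => // h.
case: Hs => _ all; move/eqP: nxy; case; exact: (index_inj x (all x) (all y) h).
Qed.

Lemma bef_asym x y : before s x y -> before s y x = false.
Proof. rewrite /before; lia. Qed.

Definition rk (A : {set T}) x := #|[set y in A | before s y x]|.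

Lemma rk_le (A : {set T}) x y : before s x y -> rk A x <= rk A y.
Proof.
move=> bxy; apply: subset_leq_card; apply/subsetP => z.
rewrite !inE => /andP[-> bzx] /=; exact: bef_trans bzx bxy.
Qed.

Lemma rk_lt (A : {set T}) x y : before s x y -> x \in A -> rk A x < rk A y.
Proof.
move=> bxy xA; apply: proper_card; apply/properP; split.
  apply/subsetP => z; rewrite !inE => /andP[-> bzx] /=; exact: bef_trans bzx bxy.
exists x; first by rewrite inE xA bxy.
by rewrite inE bef_irr andbF.
Qed.

Lemma rk_bef (A : {set T}) x y : y \in A -> before s y x = (rk A y < rk A x).
Proof.
move=> yA; case b: (before s y x); first by rewrite (rk_lt b yA).
case: (eqVneq x y) => [->|nxy]; first by rewrite ltnn.
move: (bef_total nxy); rewrite b orbF => bxy.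
by apply/esym/negbTE; rewrite -leqNgt; apply: rk_le.
Qed.

Lemma rk_inj (A : {set T}) x y : x \in A -> y \in A -> rk A x = rk A y -> x = y.
Proof.
move=> xA yA e; apply/eqP; apply/negP => /negP nxy.
case/orP: (bef_total nxy) => b.
  by move: (rk_lt b xA); rewrite e ltnn.
by move: (rk_lt b yA); rewrite e ltnn.
Qed.

Lemma rk_ub (A : {set T}) x : x \in A -> rk A x < #|A|.
Proof.
move=> xA; apply: proper_card; apply/properP; split.
  by apply/subsetP => z; rewrite inE => /andP[].
by exists x => //; rewrite inE bef_irr andbF.
Qed.

End Layout.

Section Graph.
Variables (T : finType) (e : rel T) (S : {set T}).
Hypothesis e_sym : symmetric e.
Hypothesis tc : twin_cover e S.

Lemma eGS_sym : symmetric (eGS e S).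
Proof. by move=> x y; rewrite /eGS /= e_sym; case: (x \in S); case: (y \in S); rewrite ?andbF. Qed.

Lemma comp_self v : v \notin S -> v \in Defs.comp e S v.
Proof. by move=> vS; rewrite inE vS connect0. Qed.

Lemma comp_eq v u : u \in Defs.comp e S v -> Defs.comp e S u = Defs.comp e S v.
Proof.
rewrite inE => /andP[uS cvu]; apply/setP => w; rewrite !inE.
case: (w \in S) => //=; apply/idP/idP => h.
  exact: connect_trans cvu h.
by rewrite (sym_connect_sym eGS_sym) in cvu; exact: connect_trans cvu h.
Qed.

Lemma cliquesP C : C \in cliques e S -> exists2 w, w \notin S & C = Defs.comp e S w.
Proof. by case/imsetP => w; rewrite inE => wS ->; exists w. Qed.

Lemma clique_out C u : C \in cliques e S -> u \in C -> u \notin S.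
Proof. by case/cliquesP => w _ ->; rewrite inE => /andP[]. Qed.

Lemma clique_comp C u : C \in cliques e S -> u \in C -> C = Defs.comp e S u.
Proof. by case/cliquesP => w _ -> h; rewrite (comp_eq h). Qed.

Lemma clique_twin C u v : C \in cliques e S -> u \in C -> v \in C ->
  cnbh e u = cnbh e v.
Proof.
move=> hC uC vC; apply: tc; [exact: clique_out uC|exact: clique_out vC|].
by move: vC; rewrite (clique_comp hC uC) inE => /andP[].
Qed.

Lemma clique_adj C u v : C \in cliques e S -> u \in C -> v \in C -> u != v -> e u v.
Proof.
move=> hC uC vC nuv; have := clique_twin hC uC vC.
move/setP/(_ v); rewrite !inE eqxx /= => /orP [/eqP h|//].
by rewrite h eqxx in nuv.
Qed.

Lemma adj_out v u : v \notin S -> u \notin S -> e v u -> u \in Defs.comp e S v.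
Proof. by move=> vS uS evu; rewrite inE uS; apply: connect1; rewrite /eGS /= evu vS uS. Qed.

Lemma ctype_eq C v w : C \in cliques e S -> v \in C -> w \in S ->
  (w \in ctype e S C) = e v w.
Proof.
move=> hC vC wS; rewrite /ctype; case: pickP => [p pC|]; last by move/(_ v); rewrite vC.
rewrite inE wS /=; have := clique_twin hC pC vC; move/setP/(_ w); rewrite !inE.
have nwp : (w == p) = false by apply/negbTE; apply/eqP => h; move: (clique_out hC pC); rewrite -h wS.
have nwv : (w == v) = false by apply/negbTE; apply/eqP => h; move: (clique_out hC vC); rewrite -h wS.
by rewrite nwp nwv.
Qed.

Lemma ctype_sub C : ctype e S C \subset S.
Proof.
rewrite /ctype; case: pickP => [p _|_]; last exact: sub0set.
by apply/subsetP => w; rewrite inE => /andP[].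
Qed.

Lemma clique_n0 C : C \in cliques e S -> 0 < #|C|.
Proof. by case/cliquesP => w wS ->; apply/card_gt0P; exists w; exact: comp_self. Qed.

Lemma sum_out (F : T -> nat) :
  \sum_(u in ~: S) F u = \sum_(C in cliques e S) \sum_(u in C) F u.
Proof.
rewrite (partition_big_imset (Defs.comp e S)) /=.
apply: eq_bigr => C hC; apply: eq_bigl => u; rewrite inE.
apply/idP/idP.
  case/andP => uS /eqP <-; exact: comp_self.
move=> uC; rewrite (clique_out hC uC) /=; rewrite (clique_comp hC uC); done.
Qed.

End Graph.

Definition ndist (m n : nat) := (m - n) + (n - m).

Lemma card_as_sum (T : finType) (A : {set T}) : #|A| = \sum_u (u \in A : nat).
Proof. by rewrite -sum1_card big_mkcond; apply: eq_bigr => u _; case: (u \in A). Qed.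

Lemma sum_splitS (T : finType) (A : {set T}) (F : T -> nat) :
  \sum_u F u = \sum_(u in A) F u + \sum_(u in ~: A) F u.
Proof.
rewrite (bigID (mem A)) /=; congr (_ + _); apply: eq_bigl => u //.
by rewrite inE.
Qed.

Section Rank.
Variables (T : finType) (s : seq T).
Hypothesis Hs : is_layout s.

Lemma sum_rank (C : {set T}) (F : nat -> nat) :
  \sum_(v in C) F (rk s C v) = \sum_(0 <= i < #|C|) F i.
Proof.
rewrite -big_enum -(big_map (rk s C) xpredT F).
apply: perm_big; rewrite /index_iota subn0.
have u1 : uniq [seq rk s C i | i <- enum C].
  rewrite map_inj_in_uniq ?enum_uniq // => x y; rewrite !mem_enum.
  exact: rk_inj.
apply: uniq_perm => //; first exact: iota_uniq.
have := @uniq_min_size _ _ (iota 0 #|C|) u1.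
case => //.
- move=> x /mapP [y]; rewrite mem_enum => yC ->; rewrite mem_iota /=.
  exact: rk_ub.
- by rewrite size_iota size_map -cardE.
Qed.

End Rank.

Section Vert.
Variables (T : finType) (e : rel T) (S : {set T}).
Hypothesis e_sym : symmetric e.
Hypothesis tc : twin_cover e S.
Variable s : seq T.
Hypothesis Hs : is_layout s.
Hypothesis Hc : clean e S s.

Lemma bef_neg x y : x != y -> before s x y = ~~ before s y x.
Proof.
move=> nxy; case b: (before s y x); first by rewrite (bef_asym b).
by move: (bef_total Hs nxy); rewrite b orbF.
Qed.

Lemma rS_const C u w : C \in cliques e S -> u \in C -> w \in C ->
  rk s S u = rk s S w.
Proof.
move=> hC.
suff H : forall u w, u \in C -> w \in C -> before s u w -> rk s S u = rk s S w.
  move=> uC wC; case: (eqVneq u w) => [->//|nuw].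
  case/orP: (bef_total Hs nuw) => b; first exact: H.
  by apply/esym; apply: H.
move=> {}u {}w uC wC buw; rewrite /rk; apply: eq_card => y; rewrite !inE.
case yS: (y \in S) => //=; apply/idP/idP => h; first exact: bef_trans h buw.
apply/negPn/negP => nb.
have nyu : u != y by apply/eqP => E; move: (clique_out hC uC); rewrite E yS.
rewrite -(bef_neg nyu) in nb.
move: (Hc hC uC wC nb h) => yC; move: (clique_out hC yC); by rewrite yS.
Qed.

Lemma cloc_eq C u : C \in cliques e S -> u \in C -> cloc S s C = (rk s S u).+1.
Proof.
move=> hC uC; rewrite /cloc; case: pickP => [p pC|]; last by move/(_ u); rewrite uC.
by rewrite /vloc -/(rk s S p) (rS_const hC pC uC).
Qed.

Lemma cloc_ub C : C \in cliques e S -> 1 <= cloc S s C <= #|S|.+1.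
Proof.
move=> hC; have [u uC] : exists u, u \in C by apply/card_gt0P; exact: clique_n0 hC.
rewrite (cloc_eq hC uC) /= ltnS /rk; apply: subset_leq_card.
by apply/subsetP => y; rewrite inE => /andP[].
Qed.

Lemma cardNL v : #|NL e s v| =
  \sum_(u in S) (e v u && before s u v) + \sum_(u in ~: S) (e v u && before s u v).
Proof. by rewrite card_as_sum (sum_splitS S); congr (_ + _); apply: eq_bigr => u _; rewrite inE. Qed.

Lemma cardNR v : #|NR e s v| =
  \sum_(u in S) (e v u && before s v u) + \sum_(u in ~: S) (e v u && before s v u).
Proof. by rewrite card_as_sum (sum_splitS S); congr (_ + _); apply: eq_bigr => u _; rewrite inE. Qed.

Lemma out_part C v (b : T -> bool) : C \in cliques e S -> v \in C -> b v = false ->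
  \sum_(u in ~: S) (e v u && b u) = \sum_(u in C) (b u : nat).
Proof.
move=> hC vC bv; rewrite big_mkcond [RHS]big_mkcond; apply: eq_bigr => u _.
rewrite inE; case uC: (u \in C).
  rewrite (clique_out hC uC); case: (eqVneq v u) => [<-|nvu]; first by rewrite bv andbF.
  by rewrite (clique_adj e_sym tc hC vC uC nvu).
case uS: (u \in S) => //=; case evu: (e v u) => //=.
have := adj_out (clique_out hC vC) (negbT uS) evu.
by rewrite -(clique_comp e_sym hC vC) uC.
Qed.

Lemma S_part C v (b : T -> bool) : C \in cliques e S -> v \in C ->
  \sum_(u in S) (e v u && b u) = \sum_(u in S) ((u \in ctype e S C) && b u).
Proof. by move=> hC vC; apply: eq_bigr => u uS; rewrite (ctype_eq e_sym tc hC vC uS). Qed.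

Lemma NL_out C v : C \in cliques e S -> v \in C ->
  #|NL e s v| = \sum_(u in S) ((u \in ctype e S C) && (rk s S u < rk s S v)) + rk s C v.
Proof.
move=> hC vC; rewrite cardNL (S_part _ hC vC) (@out_part C v (fun u => before s u v) hC vC) ?bef_irr //.
congr (_ + _); first by apply: eq_bigr => u uS; rewrite (rk_bef Hs _ uS).
by rewrite /rk card_as_sum big_mkcond; apply: eq_bigr => u _; rewrite inE; case: (u \in C).
Qed.

Lemma NR_out C v : C \in cliques e S -> v \in C ->
  #|NR e s v| = \sum_(u in S) ((u \in ctype e S C) && ~~ (rk s S u < rk s S v))
     + (#|C|.-1 - rk s C v).
Proof.
move=> hC vC; rewrite cardNR (S_part _ hC vC) (@out_part C v (fun u => before s v u) hC vC) ?bef_irr //.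
congr (_ + _).
  apply: eq_bigr => u uS; rewrite -(rk_bef Hs _ uS) bef_neg //.
  by apply/eqP => E; move: (clique_out hC vC); rewrite E uS.
suff : \sum_(u in C) (before s v u : nat) + rk s C v + 1 = #|C| by lia.
have -> : rk s C v = \sum_(u in C) (before s u v : nat).
  by rewrite /rk card_as_sum [RHS]big_mkcond; apply: eq_bigr => u _; rewrite inE; case: (u \in C).
have -> : 1 = \sum_(u in C) (u == v : nat).
  by rewrite (bigD1 v) //= eqxx big1 // => u /andP[_ /negbTE ->].
rewrite -!big_split -sum1_card; apply: eq_bigr => u _ /=.
case: (eqVneq u v) => [->|nuv]; first by rewrite bef_irr.
rewrite (bef_neg nuv); by case: (before s v u).
Qed.

Lemma NL_in v : v \in S ->
  #|NL e s v| = \sum_(u in S) (e v u && before s u v)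
     + \sum_(C in cliques e S) ((v \in ctype e S C) && ((cloc S s C).-1 <= rk s S v)) * #|C|.
Proof.
move=> vS; rewrite cardNL (sum_out S e_sym); congr (_ + _); apply: eq_bigr => C hC.
rewrite mulnC -sum_nat_const; apply: eq_bigr => u uC.
rewrite e_sym (ctype_eq e_sym tc hC uC vS) (cloc_eq hC uC) /= bef_neg; last first.
  by apply/eqP => E; move: (clique_out hC uC); rewrite E vS.
by rewrite (rk_bef Hs _ vS) leqNgt negbK ltnS.
Qed.

Lemma NR_in v : v \in S ->
  #|NR e s v| = \sum_(u in S) (e v u && before s v u)
     + \sum_(C in cliques e S) ((v \in ctype e S C) && ~~((cloc S s C).-1 <= rk s S v)) * #|C|.
Proof.
move=> vS; rewrite cardNR (sum_out S e_sym); congr (_ + _); apply: eq_bigr => C hC.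
rewrite mulnC -sum_nat_const; apply: eq_bigr => u uC.
rewrite e_sym (ctype_eq e_sym tc hC uC vS) (cloc_eq hC uC) /= (rk_bef Hs _ vS) leqNgt. by rewrite ltnS.
Qed.

End Vert.

Definition H (c a b : nat) := \sum_(0 <= i < c) ndist (a + i) (b + (c.-1 - i)).

Lemma H_step c a b : a <= b + c.+1 -> b <= a + c.+1 ->
  H c.+2 a b = H c a b + (c.+1).*2.
Proof.
move=> h1 h2; rewrite /H big_nat_recl // big_nat_recr //=.
have -> : \sum_(0 <= i < c) ndist (a + i.+1) (b + (c.+1 - i.+1)) =
          \sum_(0 <= i < c) ndist (a + i) (b + (c.-1 - i)).
  apply: eq_big_nat => i /andP[_ ic]; rewrite /ndist; lia.
rewrite /ndist; lia.
Qed.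

Lemma H_shift n c a b : a + b < c ->
  H (c + n.*2) a b + H c 0 0 = H (c + n.*2) 0 0 + H c a b.
Proof.
move=> hab; elim: n => [|n IH]; first by rewrite addn0 addnC.
have -> : c + n.+1.*2 = (c + n.*2).+2 by rewrite doubleS; lia.
rewrite H_step; try lia; rewrite [H (c + n.*2).+2 0 0]H_step; lia.
Qed.

Definition c0 (par : bool) (a b : nat) := if odd (a + b + 1) == par then a + b + 1 else a + b + 2.

Lemma H_large c a b : a + b < c ->
  H c a b + H (c0 (odd c) a b) 0 0 = H c 0 0 + H (c0 (odd c) a b) a b.
Proof.
move=> hab.
have [le0 par0 lt0] : [/\ c0 (odd c) a b <= c, odd (c0 (odd c) a b) = odd c & a + b < c0 (odd c) a b].
  rewrite /c0; case: eqP => h; first by split => //; lia.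
  have hp : odd (a + b + 2) = odd c.
    have -> : a + b + 2 = (a + b + 1).+1 by lia.
    by rewrite oddS; case: (odd (a+b+1)) h; case: (odd c).
  split => //; last by lia.
  case: (ltngtP c (a + b + 1)) => //; try lia.
set d := c0 (odd c) a b in le0 par0 lt0 *.
have -> : c = d + ((c - d)./2).*2.
  rewrite halfK oddB // par0 addbb subn0; lia.
exact: H_shift.
Qed.

Section Regroup.
Variables (T : finType) (e : rel T) (S : {set T}).
Let N := #|S|.+1.
Definition K := ({set T} * bool * 'I_N.+1 * 'I_N.+1)%type.
Definition kc (k : K) : class_t T := (k.1.1.1, k.1.1.2, val k.1.2).
Definition kj (k : K) : nat := val k.2.
Definition Qk (k : K) : bool := in_classes S (kc k) && (1 <= kj k <= #|S|.+1).
Definition key (q : seq T) (C : {set T}) : K :=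
  ((cclass e S C).1.1, (cclass e S C).1.2, inord (cclass e S C).2, inord (cloc S q C)).

Definition good (q : seq T) :=
  forall C, C \in cliques e S -> in_classes S (cclass e S C) /\ 1 <= cloc S q C <= #|S|.+1.

Lemma in_classes_bd nu : in_classes S nu -> nu.2 < N.+1.
Proof. by case: nu => [[Ty b] m] /=; case: b => /andP[_] /=; rewrite /N; lia. Qed.

Lemma key_spec q C : good q -> C \in cliques e S ->
  kc (key q C) = cclass e S C /\ kj (key q C) = cloc S q C.
Proof.
move=> hq hC; case: (hq C hC) => hcl /andP[_ hl].
rewrite /kc /kj /key /=; rewrite !inordK.
- by split => //; case: (cclass e S C) => [[]].
- rewrite /N; lia.
- exact: in_classes_bd.
Qed.

Lemma key_eq q C k : good q -> C \in cliques e S ->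
  (key q C == k) = (cclass e S C == kc k) && (cloc S q C == kj k).
Proof.
move=> hq hC; case: (key_spec hq hC) => E1 E2.
apply/eqP/andP.
  by move=> <-; rewrite E1 E2.
case=> /eqP h1 /eqP h2; rewrite /key h1 h2 /kc /kj /= !inord_val.
by case: k {h1 h2} => [[[]]].
Qed.

Lemma regroup1 q (G : class_t T -> nat -> nat) (w : {set T} -> nat) : good q ->
  \sum_(C in cliques e S) G (cclass e S C) (cloc S q C) * w C =
  \sum_(k | Qk k) G (kc k) (kj k) * \sum_(C in cliques_at e S q (kc k) (kj k)) w C.
Proof.
move=> hq; rewrite (partition_big (key q) Qk).
  apply: eq_bigr => k hk; rewrite big_distrr /=.
  apply: eq_big => C.
    rewrite /cliques_at inE; case hC: (C \in cliques e S) => //=.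
    exact: key_eq.
  move=> /andP[hC /eqP hk']; case: (key_spec hq hC); rewrite hk' => <- <-; done.
move=> C hC; case: (key_spec hq hC) => E1 E2; case: (hq C hC) => h1 h2.
by rewrite /Qk E1 E2 h1 h2.
Qed.

Lemma regroup s p (G : class_t T -> nat -> nat) (w : {set T} -> nat) :
  good s -> good p ->
  (forall nu j, in_classes S nu -> 1 <= j <= #|S|.+1 ->
     \sum_(C in cliques_at e S s nu j) w C = \sum_(C in cliques_at e S p nu j) w C) ->
  \sum_(C in cliques e S) G (cclass e S C) (cloc S s C) * w C =
  \sum_(C in cliques e S) G (cclass e S C) (cloc S p C) * w C.
Proof.
move=> hs hp hw; rewrite !regroup1 //; apply: eq_bigr => k /andP[h1 h2].
by rewrite hw.
Qed.

End Regroup.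

Section Main.
Variables (T : finType) (e : rel T) (S : {set T}).
Hypothesis e_sym : symmetric e.
Hypothesis tc : twin_cover e S.

Lemma good_of s : is_layout s -> clean e S s -> good e S s.
Proof.
move=> Hs Hc C hC; split; last exact: (cloc_ub Hs Hc hC).
rewrite /cclass; case: ifP => hl /=; rewrite ctype_sub //=.
  by case: (odd #|C|).
by rewrite (clique_n0 hC) /= leqNgt hl.
Qed.

Lemma imb_split s : imbalance e s =
  \sum_(v in S) imb_v e s v + \sum_(C in cliques e S) \sum_(v in C) imb_v e s v.
Proof. by rewrite /imbalance (sum_splitS S) (sum_out S e_sym). Qed.

Lemma cclass_type C : (cclass e S C).1.1 = ctype e S C.
Proof. by rewrite /cclass; case: ifP. Qed.

Variables (s p : seq T).
Hypotheses (Hs : is_layout s) (Hp : is_layout p) (Hcs : clean e S s) (Hcp : clean e S p).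
Hypothesis sim : similar S s p.

Lemma rS_sim x : x \in S -> rk s S x = rk p S x.
Proof. by move=> xS; apply: eq_card => y; rewrite !inE; case yS: (y \in S) => //=; rewrite sim. Qed.

Definition AA (nu : class_t T) (j : nat) := \sum_(u in S) ((u \in nu.1.1) && (rk s S u < j.-1)).
Definition BB (nu : class_t T) (j : nat) := \sum_(u in S) ((u \in nu.1.1) && ~~ (rk s S u < j.-1)).

Lemma AB_le nu j : AA nu j + BB nu j <= #|S|.
Proof.
rewrite /AA /BB -big_split /= -sum1_card; apply: leq_sum => u _.
by case: (u \in nu.1.1); case: (rk s S u < j.-1).
Qed.

Lemma clique_sum q : is_layout q -> clean e S q -> (forall x, x \in S -> rk q S x = rk s S x) ->
  forall C, C \in cliques e S ->
  \sum_(v in C) imb_v e q v =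
  H #|C| (AA (cclass e S C) (cloc S q C)) (BB (cclass e S C) (cloc S q C)).
Proof.
move=> Hq Hcq hr C hC.
rewrite /H -(sum_rank Hq C (fun i => ndist (AA (cclass e S C) (cloc S q C) + i)
   (BB (cclass e S C) (cloc S q C) + (#|C|.-1 - i)))).
apply: eq_bigr => v vC.
rewrite /imb_v (NL_out e_sym tc Hq hC vC) (NR_out e_sym tc Hq hC vC).
rewrite /AA /BB cclass_type (cloc_eq Hq Hcq hC vC) /=.
have E1 : \sum_(u in S) ((u \in ctype e S C) && (rk q S u < rk q S v)) =
          \sum_(u in S) ((u \in ctype e S C) && (rk s S u < rk q S v)).
  by apply: eq_bigr => u uS; rewrite hr.
have E2 : \sum_(u in S) ((u \in ctype e S C) && ~~ (rk q S u < rk q S v)) =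
          \sum_(u in S) ((u \in ctype e S C) && ~~ (rk s S u < rk q S v)).
  by apply: eq_bigr => u uS; rewrite hr.
by rewrite E1 E2.
Qed.

Definition Psi1 (nu : class_t T) (j : nat) :=
  if nu.1.2 then H (c0 (nu.2 == 1) (AA nu j) (BB nu j)) 0 0 else 0.
Definition Psi2 (nu : class_t T) (j : nat) :=
  if nu.1.2 then H (c0 (nu.2 == 1) (AA nu j) (BB nu j)) (AA nu j) (BB nu j)
  else H nu.2 (AA nu j) (BB nu j).
Definition Psi0 (C : {set T}) := if #|S| < #|C| then H #|C| 0 0 else 0.

Lemma psi_id (C : {set T}) (j : nat) :
  H #|C| (AA (cclass e S C) j) (BB (cclass e S C) j) + Psi1 (cclass e S C) j =
  Psi0 C + Psi2 (cclass e S C) j.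
Proof.
rewrite /Psi0 /Psi1 /Psi2.
have hab := AB_le (cclass e S C) j.
move: hab; rewrite /cclass; case: ifP => hl /=; last by rewrite addn0 add0n.
have -> : (nat_of_bool (odd #|C|) == 1) = odd #|C| by case: (odd #|C|).
move=> hab; apply: H_large; lia.
Qed.

Variables (alpha beta : class_t T -> nat -> nat).
Hypotheses (cs : respects_count e S s alpha) (ss : respects_size e S s beta).
Hypotheses (cp : respects_count e S p alpha) (sp : respects_size e S p beta).

Lemma regroup1s (G : class_t T -> nat -> nat) :
  \sum_(C in cliques e S) G (cclass e S C) (cloc S s C) =
  \sum_(C in cliques e S) G (cclass e S C) (cloc S p C).
Proof.
transitivity (\sum_(C in cliques e S) G (cclass e S C) (cloc S s C) * (fun _ => 1) C).
  by apply: eq_bigr => C _; rewrite muln1.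
rewrite (regroup G (good_of Hs Hcs) (good_of Hp Hcp)).
  by apply: eq_bigr => C _; rewrite muln1.
by move=> nu j h1 h2; rewrite !sum1_card cs ?cp.
Qed.

Lemma regroupc (G : class_t T -> nat -> nat) :
  \sum_(C in cliques e S) G (cclass e S C) (cloc S s C) * #|C| =
  \sum_(C in cliques e S) G (cclass e S C) (cloc S p C) * #|C|.
Proof.
rewrite (regroup G (good_of Hs Hcs) (good_of Hp Hcp)) //.
by move=> nu j h1 h2; rewrite ss ?sp.
Qed.

Lemma cliques_part :
  \sum_(C in cliques e S) \sum_(v in C) imb_v e s v =
  \sum_(C in cliques e S) \sum_(v in C) imb_v e p v.
Proof.
rewrite (eq_bigr _ (clique_sum Hs Hcs (fun x _ => erefl))).
rewrite (eq_bigr _ (clique_sum Hp Hcp (fun x xS => esym (rS_sim xS)))).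
have Es : \sum_(C in cliques e S) H #|C| (AA (cclass e S C) (cloc S s C)) (BB (cclass e S C) (cloc S s C))
   + \sum_(C in cliques e S) Psi1 (cclass e S C) (cloc S s C)
   = \sum_(C in cliques e S) Psi0 C + \sum_(C in cliques e S) Psi2 (cclass e S C) (cloc S s C).
  rewrite -!big_split; apply: eq_bigr => C _ /=. exact: psi_id.
have Ep : \sum_(C in cliques e S) H #|C| (AA (cclass e S C) (cloc S p C)) (BB (cclass e S C) (cloc S p C))
   + \sum_(C in cliques e S) Psi1 (cclass e S C) (cloc S p C)
   = \sum_(C in cliques e S) Psi0 C + \sum_(C in cliques e S) Psi2 (cclass e S C) (cloc S p C).
  rewrite -!big_split; apply: eq_bigr => C _ /=. exact: psi_id.
rewrite (regroup1s Psi1) (regroup1s Psi2) in Es.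
lia.
Qed.

Lemma S_vertex v : v \in S -> imb_v e s v = imb_v e p v.
Proof.
move=> vS; rewrite /imb_v (NL_in e_sym tc Hs Hcs vS) (NR_in e_sym tc Hs Hcs vS).
rewrite (NL_in e_sym tc Hp Hcp vS) (NR_in e_sym tc Hp Hcp vS).
have L1 : \sum_(u in S) (e v u && before s u v) = \sum_(u in S) (e v u && before p u v).
  by apply: eq_bigr => u uS; rewrite sim.
have L2 : \sum_(u in S) (e v u && before s v u) = \sum_(u in S) (e v u && before p v u).
  by apply: eq_bigr => u uS; rewrite sim.
have L3 : forall q, \sum_(C in cliques e S) ((v \in ctype e S C) && ((cloc S q C).-1 <= rk q S v)) * #|C| =
  \sum_(C in cliques e S) (fun (nu : class_t T) (j : nat) => (v \in nu.1.1) && (j.-1 <= rk q S v)) (cclass e S C) (cloc S q C) * #|C|.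
  by move=> q; apply: eq_bigr => C _ /=; rewrite cclass_type.
have L4 : forall q, \sum_(C in cliques e S) ((v \in ctype e S C) && ~~((cloc S q C).-1 <= rk q S v)) * #|C| =
  \sum_(C in cliques e S) (fun (nu : class_t T) (j : nat) => (v \in nu.1.1) && ~~(j.-1 <= rk q S v)) (cclass e S C) (cloc S q C) * #|C|.
  by move=> q; apply: eq_bigr => C _ /=; rewrite cclass_type.
rewrite !L3 !L4 L1 L2 -(rS_sim vS) (regroupc (fun (nu : class_t T) (j : nat) => (v \in nu.1.1) && (j.-1 <= rk s S v))).
by rewrite (regroupc (fun (nu : class_t T) (j : nat) => (v \in nu.1.1) && ~~(j.-1 <= rk s S v))).
Qed.

Lemma main_eq : imbalance e s = imbalance e p.
Proof.
rewrite !imb_split cliques_part; congr (_ + _).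
by apply: eq_bigr => v vS; exact: S_vertex.
Qed.

End Main.

Theorem lemma3 (T : finType) (e : rel T) (S : {set T}) (k : nat)
    (alpha beta : class_t T -> nat -> nat) (sigma pi : seq T) :
  simple_graph e ->
  twin_cover e S -> #|S| = k ->
  spec_fun S alpha -> spec_fun S beta ->
  is_layout sigma -> is_layout pi ->
  clean e S sigma -> clean e S pi ->
  similar S sigma pi ->
  respects_count e S sigma alpha -> respects_size e S sigma beta ->
  respects_count e S pi alpha -> respects_size e S pi beta ->
  imbalance e sigma = imbalance e pi.
Proof.
move=> [esym _] tc _ _ _ Hs Hp Hcs Hcp sim cs ss cp sp.
exact: (main_eq esym tc Hs Hp Hcs Hcp sim cs ss cp sp).
Qed.
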